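(* For every indexed forest $F$ and every noncrossing permutation $\sigma$, the evaluation $\mathrm{ev}_\sigma(\mathfrak P_F)$ is Graham-positive, i.e. lies in $\mathbb Z_{\ge0}[t_2-t_1,t_3-t_2,\dots]$.
   Context: $\mathbf x=(x_1,x_2,\dots)$, $\mathbf t=(t_1,t_2,\dots)$; for $\sigma\in S_n$ (regarded as fixing integers $>n$), $\mathrm{ev}_\sigma f=f(t_{\sigma(1)},t_{\sigma(2)},\dots;\mathbf t)$. A set partition of $[n]$ is noncrossing if there are no distinct blocks $P,Q$ with $a,b\in P$, $c,d\in Q$, $a<c<b<d$; the associated noncrossing permutation acts on each block $\{a_1<\dots<a_p\}$ by $a_j\mapsto a_{j-1}$ ($j\ge2$), $a_1\mapsto a_p$. Indexed forests: sequences $F=(T_1,T_2,\dots)$ of binary plane trees (each node a leaf or an internal node with ordered left/right children), all but finitely many one-node trees; leaves identified with $\mathbb N$ left to right; $\emptyset$ has no internal nodes; $\rho_F(v)$ is the leaf reached from internal node $v$ by going repeatedly to left children; terminal: both children leaves; $\mathrm{Qdes}(F)=\{\rho_F(v):v\text{ terminal}\}$; $F/i$ deletes the terminal node with $\rho_F(v)=i$ (replacing it and its leaves by one leaf, relabeling). Double forest polynomials: $R_i^-f=f(x_1,\dots,x_{i-1},t_i,x_i,\dots;\mathbf t)$, $R_i^+f=f(x_1,\dots,x_i,t_i,x_{i+1},\dots;\mathbf t)$, $E_if=(R_i^+f-R_i^-f)/(x_i-t_i)$; $\mathfrak P_F$ is the unique homogeneous family ($\deg x_i=\deg t_i=1$)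 with $\mathfrak P_F(\mathbf t;\mathbf t)=\delta_{F,\emptyset}$ and $E_i\mathfrak P_F=\mathfrak P_{F/i}(\mathbf x;\widehat{\mathbf t}_i)$ if $i\in\mathrm{Qdes}(F)$, else $0$, $\widehat{\mathbf t}_i=(t_1,\dots,t_{i-1},t_{i+1},\dots)$. *)

(* Defs.v *)
From HB Require Import structures.
From mathcomp Require Import all_boot all_order all_algebra all_fingroup.
From mathcomp Require Import finmap.
From mathcomp.multinomials Require Import monalg.

Set Implicit Arguments.
Unset Strict Implicit.
Unset Printing Implicit Defensive.

Import GRing.Theory Num.Theory.
Local Open Scope ring_scope.

(* Conventions: everything is 0-based.  The Rocq variable index k      *)
(* stands for the paper's index k+1: X k = x_{k+1}, T k = t_{k+1},     *)
(* leaf k = paper's leaf k+1, and a permutation of 'I_n is a           *)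
(* permutation of [n] = {1..n}.                                        *)

(* Variables: inl k = x_{k+1}, inr k = t_{k+1}. *)
Definition var := (nat + nat)%type.

Definition xtpoly := {malg int[{cmonom var}]}.

Definition X (k : nat) : xtpoly := << @ucm var (inl k) >>.
Definition T (k : nat) : xtpoly := << @ucm var (inr k) >>.

Definition msubst {V : choiceType} (h : V -> xtpoly)
    (p : {malg int[{cmonom V}]}) : xtpoly :=
  \sum_(m <- msupp p)
     ((p@_m)%:MP : xtpoly) * \prod_(v <- finsupp m) h v ^+ m v.

Definition homogeneous (f : xtpoly) : Prop :=
  exists d : nat, forall m, m \in msupp f -> mdeg m = d.

(* R_i^- f = f(x_1,..,x_{i-1}, t_i, x_i, ...; t) *)
Definition Rm (i : nat) (f : xtpoly) : xtpoly :=
  msubst (fun v : var => match v with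
                   | inl j => if (j < i)%N then X j else if (j == i)%N then T i
                              else X j.-1
                   | inr j => T j end) f.

(* R_i^+ f = f(x_1,..,x_i, t_i, x_{i+1}, ...; t) *)
Definition Rp (i : nat) (f : xtpoly) : xtpoly :=
  msubst (fun v : var => match v with
                   | inl j => if (j <= i)%N then X j else if (j == i.+1)%N then T i
                              else X j.-1
                   | inr j => T j end) f.

(* E_i f = g  means  g = (R_i^+ f - R_i^- f) / (x_i - t_i) (exact division
   in the integral domain xtpoly) *)
Definition E_is (i : nat) (f g : xtpoly) : Prop :=
  (X i - T i) * g = Rp i f - Rm i f.

(* f(x; \hat t_i), \hat t_i = (t_1,..,t_{i-1}, t_{i+1}, ...) *)
Definition hat_t (i : nat) (f : xtpoly) : xtpoly :=
  msubst (fun v : var => match v with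
                   | inl j => X j
                   | inr j => if (j < i)%N then T j else T j.+1 end) f.

Definition at_tt (f : xtpoly) : xtpoly :=
  msubst (fun v : var => match v with inl j => T j | inr j => T j end) f.

Inductive tree : Type := Leaf | Node of tree & tree.

Fixpoint nleaves (t : tree) : nat :=
  match t with Leaf => 1%N | Node l r => (nleaves l + nleaves r)%N end.

Fixpoint ninternal (t : tree) : nat :=
  match t with Leaf => 0%N | Node l r => (ninternal l + ninternal r).+1 end.

(* An indexed forest (T_1, T_2, ...) is represented by a finite list
   [T_1; ...; T_m]; all the trees after T_m are one-node trees (Leaf).
   Trailing Leafs in the list are allowed (they represent the same forest). *)
Definition forest := seq tree.

(* rho-values of terminal nodes of a tree whose leftmost leaf is labelled a *)
Fixpoint tqdes (a : nat) (t : tree) : seq nat :=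
  match t with
  | Leaf => [::]
  | Node Leaf Leaf => [:: a]
  | Node l r => tqdes a l ++ tqdes (a + nleaves l) r
  end.

Fixpoint fqdes (a : nat) (F : forest) : seq nat :=
  match F with
  | [::] => [::]
  | t :: F' => tqdes a t ++ fqdes (a + nleaves t) F'
  end.

Definition Qdes (F : forest) : seq nat := fqdes 0 F.

(* delete the terminal node with rho = i (labels are positional, so the
   relabelling is automatic) *)
Fixpoint tcontract (i a : nat) (t : tree) : tree :=
  match t with
  | Leaf => Leaf
  | Node Leaf Leaf => if a == i then Leaf else Node Leaf Leaf
  | Node l r => Node (tcontract i a l) (tcontract i (a + nleaves l) r)
  end.

Fixpoint fcontract (i a : nat) (F : forest) : forest :=
  match F with
  | [::] => [::]
  | t :: F' => tcontract i a t :: fcontract i (a + nleaves t) F'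
  end.

Definition contract (F : forest) (i : nat) : forest := fcontract i 0 F.

Definition is_empty_forest (F : forest) : bool :=
  all (fun t => ninternal t == 0%N) F.

Definition is_double_forest_family (P : forest -> xtpoly) : Prop :=
  [/\ forall F, homogeneous (P F),
      forall F, at_tt (P F) = (if is_empty_forest F then 1 else 0)
    & forall F i, E_is i (P F)
                    (if i \in Qdes F then hat_t i (P (contract F i)) else 0)].

Definition noncrossing {n : nat} (Q : {set {set 'I_n}}) : Prop :=
  forall B C, B \in Q -> C \in Q -> B != C ->
  ~ (exists a b c d, [/\ a \in B, b \in B, c \in C & d \in C] /\
                     [/\ a < c, c < b & b < d]%N).

(* the associated permutation: on a block {a_1 < ... < a_p},
   a_j |-> a_{j-1} (j >= 2), a_1 |-> a_p *)
Definition ncperm_val {n : nat} (Q : {set {set 'I_n}}) (x : 'I_n) : nat :=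
  let s := sort leq [seq val y | y <- enum (pblock Q x)] in
  let j := index (val x) s in
  if j == 0%N then last 0%N s else nth 0%N s j.-1.

Definition noncrossing_perm {n : nat} (s : {perm 'I_n}) : Prop :=
  exists Q : {set {set 'I_n}},
    [/\ partition Q [set: 'I_n], noncrossing Q &
        forall x, val (s x) = ncperm_val Q x].

Definition perm_nat {n : nat} (s : {perm 'I_n}) (j : nat) : nat :=
  match @insub nat (fun k => k < n)%N 'I_n j with
  | Some k => val (s k)
  | None => j
  end.

Definition ev {n : nat} (s : {perm 'I_n}) (f : xtpoly) : xtpoly :=
  msubst (fun v : var => match v with
                   | inl j => T (perm_nat s j)
                   | inr j => T j end) f.

Definition graham_positive (f : xtpoly) : Prop :=
  exists q : {malg int[{cmonom nat}]},
    (forall m, 0 <= q@_m) /\ msubst (fun k => T k.+1 - T k) q = f.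

(* Main.v *)
Require Import Defs.
From mathcomp Require Import all_boot all_order all_algebra all_fingroup.
From HB Require Import structures.
From mathcomp Require Import finmap.
From mathcomp.multinomials Require Import monalg.
From mathcomp Require Import zify.

Set Implicit Arguments.
Unset Strict Implicit.
Unset Printing Implicit Defensive.

Module CombM.


Record NCS (n : nat) (e : nat -> nat -> bool) (s : nat -> nat) : Prop := {
  ncs_dom : forall x y, e x y -> x < n;
  ncs_refl : forall x, x < n -> e x x;
  ncs_sym : forall x y, e x y -> e y x;
  ncs_trans : forall x y z, e x y -> e y z -> e x z;
  ncs_nc : forall a b c d, e a b -> e c d -> a < c -> c < b -> b < d -> e a c;
  ncs_fix : forall x, n <= x -> s x = x;
  ncs_in : forall x, x < n -> e x (s x);
  ncs_pred : forall x y, x < n -> s x < x -> e x y -> s x < y -> y < x -> False;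
  ncs_max : forall x y, x < n -> x <= s x -> e x y -> x <= y <= s x }.

Section NCSTheory.
Variables (n : nat) (e : nat -> nat -> bool) (s : nat -> nat).
Hypothesis H : NCS n e s.

Lemma ncs_lt x : x < n -> s x < n.
Proof. move=> xn; exact: (ncs_dom H (ncs_sym H (ncs_in H xn))). Qed.

Lemma ncs_dom2 x y : e x y -> y < n.
Proof. by move=> /(ncs_sym H) /(ncs_dom H). Qed.

Lemma ncs_inj x y : s x = s y -> x = y.
Proof.
move=> exy.
case: (ltnP x n) => xn; case: (ltnP y n) => yn.
- have ex := ncs_in H xn; have ey := ncs_in H yn.
  rewrite exy in ex.
  have exy' : e x y := ncs_trans H ex (ncs_sym H ey).
  have eyx := ncs_sym H exy'.
  case: (ltnP (s x) x) => hx; case: (ltnP (s y) y) => hy.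
  + case: (ltngtP x y) => // c.
    * by exfalso; apply: (ncs_pred H yn hy eyx); lia.
    * by exfalso; apply: (ncs_pred H xn hx exy'); lia.
  + have := ncs_max H yn hy eyx; lia.
  + have := ncs_max H xn hx exy'; lia.
  + have := ncs_max H xn hx exy'; have := ncs_max H yn hy eyx; lia.
- have := ncs_lt xn; rewrite exy (ncs_fix H yn); lia.
- have := ncs_lt yn; rewrite -exy (ncs_fix H xn); lia.
- by rewrite -(ncs_fix H xn) -(ncs_fix H yn).
Qed.

Lemma ncs_below x y : x < n -> e x y -> y < x -> s x < x.
Proof.
move=> xn exy yx; case: (ltnP (s x) x) => // h.
have := ncs_max H xn h exy; lia.
Qed.

Lemma ncs_move :
  (exists x, s x <> x) ->
  exists i, i.+1 < n /\ ((s i.+1 = i /\ i < s i) \/ (s i = i /\ s i.+1 < i)).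
Proof.
move=> [x hx].
have ex : exists m, s m < m.
  case: (ltngtP (s x) x) => h; first by exists x.
  - have xn : x < n by case: (ltnP x n) => // /(ncs_fix H); lia.
    exists (s x); apply: (ncs_below (ncs_lt xn) (ncs_sym H (ncs_in H xn))) => //.
  - by exfalso; apply: hx.
case: (ex_minnP ex) => m hm hmin.
have mn : m < n by case: (ltnP m n) => // /(ncs_fix H); lia.
set a := s m in hm.
have ema : e m a := ncs_in H mn.
have an : a < n := ncs_lt mn.
have kfix : forall k, a < k < m -> s k = k.
  move=> k /andP[ak km].
  have kn : k < n by lia.
  have ks : k <= s k by case: (ltnP (s k) k) => // /hmin; lia.
  have [ksk|//] : k < s k \/ s k = k by lia.
  exfalso.
  set z := s k in ksk ks.
  have ekz : e k z := ncs_in H kn.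
  have zn : z < n := ncs_lt kn.
  case: (ltnP (s z) z) => hz.
  + have mz : m <= z := hmin z hz.
    have [c|c] : m < z \/ m = z by lia.
    * have eak : e a k := ncs_nc H (ncs_sym H ema) ekz ak km c.
      apply: (ncs_pred H mn hm (ncs_trans H ema eak)); rewrite -/a; lia.
    * have emk : e m k by rewrite c; exact: (ncs_sym H ekz).
      apply: (ncs_pred H mn hm emk); rewrite -/a; lia.
  + have := ncs_max H zn hz (ncs_sym H ekz); lia.
case: (ltnP a.+1 m) => am.
- exists m.-1; split; first lia.
  right; have hi := kfix m.-1 ltac:(lia).
  split => //; have -> : m.-1.+1 = m by lia.
  by rewrite -/a; lia.
- exists a; split; first lia.
  left; have am' : a.+1 = m by lia.
  have asa : a <= s a by case: (ltnP (s a) a) => // /hmin; lia.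
  have [c|c] : a < s a \/ a = s a by lia.
    by split; [rewrite am' | exact: c].
  exfalso; have := ncs_max H an asa (ncs_sym H ema); lia.
Qed.

End NCSTheory.

Definition sw (i : nat) (s : nat -> nat) (x : nat) : nat :=
  s (if x == i then i.+1 else if x == i.+1 then i else x).

Definition e1 (i : nat) (e : nat -> nat -> bool) (x y : nat) : bool :=
  ((x == i) && (y == i)) || [&& x != i, y != i & e x y].

Lemma NCS_M1 n e s i : NCS n e s -> i.+1 < n -> s i.+1 = i -> i < s i ->
  NCS n (e1 i e) (sw i s).
Proof.
move=> H i1n si1 isi.
have ein : e i.+1 i by rewrite -{2}si1; apply: (ncs_in H).
have imin : forall y, e i y -> i <= y <= s i.
  by move=> y; apply: (ncs_max H) => //; lia.
have ei1 : forall x y, e1 i e x y -> (x = i /\ y = i) \/ [/\ x <> i, y <> i & e x y].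
  move=> x y /orP [/andP [/eqP -> /eqP ->]|/and3P [/eqP ? /eqP ? ?]]; by [left | right].
have ei1I : forall x y, x <> i -> y <> i -> e x y -> e1 i e x y.
  move=> x y /eqP xi /eqP yi exy; apply/orP; right; apply/and3P; split => //.
have ei1ii : e1 i e i i by rewrite /e1 eqxx.
split.
- move=> x y /ei1 [[-> _]|[_ _ /(ncs_dom H)]] //; lia.
- move=> x xn; case: (eqVneq x i) => [->|xi] //.
  by apply: ei1I => //; [apply/eqP | apply/eqP | apply: (ncs_refl H)].
- move=> x y /ei1 [[-> ->]|[xi yi exy]] //; apply: ei1I => //; exact: (ncs_sym H).
- move=> x y z /ei1 [[-> ->]|[xi yi exy]] // /ei1 [[? ->]|[_ zi eyz]] //.
  apply: ei1I => //; exact: (ncs_trans H exy eyz).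
- move=> a b c d /ei1 [[-> ->]|[ai bi eab]]; first lia.
  move=> /ei1 [[-> ->]|[ci di ecd]]; first lia.
  move=> ac cb bd; apply: ei1I => //; exact: (ncs_nc H eab ecd ac cb bd).
- move=> x xn; rewrite /sw.
  have -> : (x == i) = false by apply/eqP; lia.
  have -> : (x == i.+1) = false by apply/eqP; lia.
  exact: (ncs_fix H).
- move=> x xn; rewrite /sw; case: (eqVneq x i) => [->|xi]; first by rewrite si1.
  case: (eqVneq x i.+1) => [->|xi1].
    have sin : s i != i by apply/eqP; lia.
    apply: ei1I; [lia | apply/eqP; exact: sin | ].
    exact: (ncs_trans H ein (ncs_in H (ltnW i1n))).
  have sxi : s x <> i.
    move=> h; have hx : x = i.+1 by apply: (ncs_inj H); rewrite h si1.
    by rewrite hx eqxx in xi1.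
  apply: ei1I => //; [exact/eqP | exact: (ncs_in H)].
- move=> x y xn; rewrite /sw; case: (eqVneq x i) => [->|xi]; first by rewrite si1; lia.
  case: (eqVneq x i.+1) => [->|xi1]; first lia.
  move=> h /ei1 [[hx ->]|[_ yi exy]]; first by rewrite hx eqxx in xi.
  exact: (ncs_pred H xn h exy).
- move=> x y xn; rewrite /sw; case: (eqVneq x i) => [->|xi].
    by rewrite si1 => _ /ei1 [[_ ->]|[]] //; lia.
  case: (eqVneq x i.+1) => [->|xi1].
    move=> _ /ei1 [[? ->]|[_ yi ey]]; first lia.
    have := imin y (ncs_trans H (ncs_sym H ein) ey); lia.
  move=> h /ei1 [[hx ->]|[_ yi exy]]; first by rewrite hx eqxx in xi.
  exact: (ncs_max H xn h exy).
Qed.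

Definition rho (i x : nat) : nat := if x == i then i.+1 else x.
Definition e2 (i : nat) (e : nat -> nat -> bool) (x y : nat) : bool :=
  e (rho i x) (rho i y).

Lemma NCS_M2 n e s i : NCS n e s -> i.+1 < n -> s i = i -> s i.+1 < i ->
  NCS n (e2 i e) (sw i s).
Proof.
move=> H i1n sii si1.
have isg : forall y, e i y -> y = i.
  move=> y eiy; have := ncs_max H (ltnW i1n) (eq_leq (esym sii)) eiy; lia.
have rhoE : forall x, x != i -> rho i x = x by move=> x /negbTE xi; rewrite /rho xi.
have rhoi : rho i i = i.+1 by rewrite /rho eqxx.
have rho_ge : forall x, x <= rho i x by move=> x; rewrite /rho; case: eqP => //; lia.
have rho_mono : forall x y, x < y -> rho i x <= rho i y.
  by move=> x y; rewrite /rho; case: eqP; case: eqP; lia.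
have rho_lt : forall x, x < n -> rho i x < n by move=> x; rewrite /rho; case: eqP; lia.
split.
- move=> x y /(ncs_dom H); have := rho_ge x; lia.
- by move=> x /rho_lt xn; apply: (ncs_refl H).
- by move=> x y; rewrite /e2 => /(ncs_sym H).
- by move=> x y z; rewrite /e2 => exy eyz; apply: (ncs_trans H exy eyz).
- move=> a b c d; rewrite /e2 => eab ecd ac cb bd.
  have h1 := rho_mono _ _ ac; have h2 := rho_mono _ _ cb; have h3 := rho_mono _ _ bd.
  have [q|q] : rho i a = rho i c \/ rho i a < rho i c by lia.
    by rewrite q; apply: (ncs_refl H); apply: (ncs_dom H ecd).
  have [q2|q2] : rho i c = rho i b \/ rho i c < rho i b by lia.
    by rewrite q2.
  have [q3|q3] : rho i b = rho i d \/ rho i b < rho i d by lia.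
    by apply: (ncs_trans H eab); rewrite q3; apply: (ncs_sym H).
  exact: (ncs_nc H eab ecd q q2 q3).
- move=> x xn; rewrite /sw.
  have -> : (x == i) = false by apply/eqP; lia.
  have -> : (x == i.+1) = false by apply/eqP; lia.
  exact: (ncs_fix H).
- move=> x xn; rewrite /sw /e2; case: (eqVneq x i) => [->|xi].
    rewrite rhoi rhoE; last by apply/eqP; lia.
    exact: (ncs_in H).
  case: (eqVneq x i.+1) => [->|xi1].
    rewrite sii rhoi rhoE; [exact: (ncs_refl H) | apply/eqP; lia].
  have sxi : s x != i.
    apply/eqP => h; have hx : x = i by apply: (ncs_inj H); rewrite h sii.
    by rewrite hx eqxx in xi.
  rewrite (rhoE _ xi) (rhoE _ sxi); exact: (ncs_in H).
- move=> x y xn; rewrite /sw /e2; case: (eqVneq x i) => [->|xi].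
    rewrite rhoi => h ey h1 h2.
    have yi : y != i by apply/eqP; lia.
    rewrite (rhoE _ yi) in ey.
    apply: (ncs_pred H i1n _ ey); lia.
  case: (eqVneq x i.+1) => [->|xi1]; first by rewrite sii; lia.
  rewrite (rhoE _ xi) => h ey h1 h2.
  case: (eqVneq y i) => [yi|yi].
    rewrite yi rhoi in ey h1 h2.
    apply: (ncs_pred H xn h ey); first lia.
    have : x != i.+1 := xi1; move/eqP; lia.
  rewrite (rhoE _ yi) in ey; exact: (ncs_pred H xn h ey).
- move=> x y xn; rewrite /sw /e2; case: (eqVneq x i) => [->|xi].
    by rewrite rhoi; lia.
  case: (eqVneq x i.+1) => [->|xi1]; first by rewrite sii; lia.
  rewrite (rhoE _ xi) => h ey.
  case: (eqVneq y i) => [yi|yi].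
    rewrite yi rhoi in ey.
    have := ncs_max H xn h ey; have : x != i.+1 := xi1; move/eqP; rewrite yi; lia.
  rewrite (rhoE _ yi) in ey; exact: (ncs_max H xn h ey).
Qed.

Definition hatf (r x : nat) : nat := if x < r then x else x.+1.
Definition unhat (r v : nat) : nat := if v < r then v else v.-1.
Definition stil (r : nat) (s : nat -> nat) (x : nat) : nat :=
  if s x == r then s r else s x.
Definition sdel (r : nat) (s : nat -> nat) (x : nat) : nat :=
  unhat r (stil r s (hatf r x)).
Definition edel (r : nat) (e : nat -> nat -> bool) (x y : nat) : bool :=
  e (hatf r x) (hatf r y).

Lemma hatf_ne r x : hatf r x != r.
Proof. by rewrite /hatf; case: ltnP => h; apply/eqP; lia. Qed.

Lemma hatf_unhat r v : v != r -> hatf r (unhat r v) = v.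
Proof. by move/eqP; rewrite /hatf /unhat; case: (ltnP v r) => h1; case: ltnP; lia. Qed.

Lemma hatf_lt r x y : (hatf r x < hatf r y) = (x < y).
Proof. by rewrite /hatf; case: (ltnP x r); case: (ltnP y r); lia. Qed.

Lemma unhat_lt r v y : v != r -> (unhat r v < y) = (v < hatf r y).
Proof.
by move/eqP; rewrite /hatf /unhat; case: (ltnP v r); case: (ltnP y r); lia.
Qed.

Lemma unhat_gt r v y : v != r -> (y < unhat r v) = (hatf r y < v).
Proof.
by move/eqP; rewrite /hatf /unhat; case: (ltnP v r); case: (ltnP y r); lia.
Qed.

Section Del.
Variables (n : nat) (e : nat -> nat -> bool) (s : nat -> nat) (r : nat).
Hypothesis H : NCS n e s.
Hypothesis rn : r < n.

Lemma del_core y0 w : y0 < n -> y0 != r -> w != r -> e y0 w ->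
  let v := stil r s y0 in
  [/\ v != r, e y0 v, v < y0 -> ~ (v < w < y0) & y0 <= v -> y0 <= w <= v].
Proof.
move=> y0n y0r wr ew v.
rewrite /v /stil; case: (eqVneq (s y0) r) => [syr|syr]; last first.
  split => //; first exact: (ncs_in H).
    by move=> h /andP [h1 h2]; apply: (ncs_pred H y0n h ew).
  by move=> h; apply: (ncs_max H y0n h ew).
have ey0r : e y0 r by rewrite -syr; apply: (ncs_in H).
have srr : s r != r.
  apply/eqP => h; have : y0 = r by apply: (ncs_inj H); rewrite syr h.
  by move/eqP; rewrite (negbTE y0r).
have erw : e r w := ncs_trans H (ncs_sym H ey0r) ew.
split => //; first exact: (ncs_trans H ey0r (ncs_in H rn)).
- move=> h /andP [h1 h2].
  case: (ltnP r y0) => ry.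
  + have sy : s y0 < y0 by rewrite syr.
    have wr' : w < r.
      have : ~ (s y0 < w < y0) by move=> /andP [a b]; apply: (ncs_pred H y0n sy ew).
      move/eqP: wr; rewrite syr; lia.
    case: (ltnP (s r) r) => hr.
    * by apply: (ncs_pred H rn hr erw).
    * have := ncs_max H rn hr erw; lia.
  + have yr : y0 <= s y0 by rewrite syr.
    have := ncs_max H y0n yr (ncs_trans H ey0r (ncs_in H rn)); lia.
- move=> h.
  case: (ltnP r y0) => ry.
  + have hr : r <= s r by lia.
    have := ncs_max H rn hr erw.
    have sy : s y0 < y0 by rewrite syr.
    have : ~ (s y0 < w < y0) by move=> /andP [a b]; apply: (ncs_pred H y0n sy ew).
    move/eqP: wr; rewrite syr; lia.
  + have yr : y0 <= s y0 by rewrite syr.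
    have hw := ncs_max H y0n yr ew.
    have hr : s r < r.
      case: (ltnP (s r) r) => // hr.
      have := ncs_max H rn hr (ncs_sym H ey0r).
      move/eqP: y0r; lia.
    have : ~ (s r < w < r) by move=> /andP [a b]; apply: (ncs_pred H rn hr erw).
    move/eqP: wr; rewrite syr in hw; lia.
Qed.

Lemma NCS_del : NCS n.-1 (edel r e) (sdel r s).
Proof.
have hlt : forall x, x < n.-1 -> hatf r x < n by move=> x xn; rewrite /hatf; case: (ltnP x r); lia.
split.
- move=> x y /(ncs_dom H); rewrite /hatf; case: (ltnP x r); lia.
- by move=> x /hlt xn; apply: (ncs_refl H).
- by move=> x y; rewrite /edel => /(ncs_sym H).
- by move=> x y z; rewrite /edel => exy eyz; apply: (ncs_trans H exy eyz).
- move=> a b c d; rewrite /edel => eab ecd ac cb bd.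
  by apply: (ncs_nc H eab ecd); rewrite hatf_lt.
- move=> x xn; rewrite /sdel /stil.
  have hx : hatf r x = x.+1 by rewrite /hatf; case: ltnP => //; lia.
  rewrite hx (ncs_fix H); last by lia.
  have -> : (x.+1 == r) = false by apply/eqP; lia.
  by rewrite /unhat; case: ltnP => //; lia.
- move=> x xn; rewrite /edel /sdel.
  have [v1 ev _ _] := del_core (hlt _ xn) (hatf_ne r x) (hatf_ne r x) (ncs_refl H (hlt _ xn)).
  by rewrite hatf_unhat.
- move=> x y xn; rewrite /edel /sdel => h ey h1 h2.
  have [v1 _ hp _] := del_core (hlt _ xn) (hatf_ne r x) (hatf_ne r y) ey.
  rewrite unhat_lt // in h; rewrite unhat_lt // in h1.
  apply: hp => //; apply/andP; split => //; by rewrite hatf_lt.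
- move=> x y xn; rewrite /edel /sdel => h ey.
  have [v1 _ _ hm] := del_core (hlt _ xn) (hatf_ne r x) (hatf_ne r y) ey.
  move: h; rewrite leqNgt unhat_lt // -leqNgt => /hm /andP [h1 h2].
  apply/andP; split; first by rewrite leqNgt -(hatf_lt r) -leqNgt.
  by rewrite leqNgt unhat_lt // -leqNgt.
Qed.

End Del.

Definition mu (n : nat) (s : nat -> nat) : nat := \sum_(0 <= x < n) x * s x.

Lemma mu_bound n e s : NCS n e s -> mu n s <= n * (n * n).
Proof.
move=> H; rewrite /mu.
have -> : n * (n * n) = \sum_(0 <= x < n) (n * n).
  by rewrite sum_nat_const_nat subn0.
rewrite big_nat [X in _ <= X]big_nat; apply: leq_sum => x /andP [_ xn].
have := ncs_lt H xn; nia.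
Qed.

Lemma sum_two (f g : nat -> nat) n i : i.+1 < n ->
  (forall x, x != i -> x != i.+1 -> f x = g x) ->
  \sum_(0 <= x < n) g x + (f i + f i.+1) = \sum_(0 <= x < n) f x + (g i + g i.+1).
Proof.
move=> i1n hfg.
have split3 : forall h : nat -> nat, \sum_(0 <= x < n) h x =
   \sum_(0 <= x < i) h x + (h i + h i.+1) + \sum_(i.+2 <= x < n) h x.
  move=> h.
  have l1 : i.+2 <= n by [].
  have l2 : i <= i.+2 by lia.
  rewrite (@big_cat_nat _ _ _ i.+2 0 n _ _ (leq0n _) l1).
  rewrite (@big_cat_nat _ _ _ i 0 i.+2 _ _ (leq0n _) l2).
  rewrite (@big_nat_recl _ _ _ i.+1 i) // (@big_nat_recl _ _ _ i i) //.
  rewrite (@big_geq _ _ _ i i) // /=; lia.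
rewrite !split3.
have e1 : \sum_(0 <= x < i) g x = \sum_(0 <= x < i) f x.
  rewrite !big_nat; apply: eq_bigr => x /andP [_ xi]; symmetry; apply: hfg; apply/eqP; lia.
have e2 : \sum_(i.+2 <= x < n) g x = \sum_(i.+2 <= x < n) f x.
  rewrite !big_nat; apply: eq_bigr => x /andP [xi _]; symmetry; apply: hfg; apply/eqP; lia.
rewrite e1 e2; lia.
Qed.

Lemma mu_sw n s i : i.+1 < n -> s i.+1 < s i -> mu n s < mu n (sw i s).
Proof.
move=> i1n h.
have := sum_two (f := fun x => x * s x) (g := fun x => x * sw i s x) i1n.
have swi : sw i s i = s i.+1 by rewrite /sw eqxx.
have swi1 : sw i s i.+1 = s i by rewrite /sw (_ : (i.+1 == i) = false) ?eqxx //; apply/eqP; lia.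
rewrite swi swi1 /mu => /(_ _) hh.
have : \sum_(0 <= x < n) x * sw i s x + (i * s i + i.+1 * s i.+1) =
       \sum_(0 <= x < n) x * s x + (i * s i.+1 + i.+1 * s i).
  apply: hh => x /negbTE xi /negbTE xi1; by rewrite /sw xi xi1.
nia.
Qed.

End CombM.
Import CombM.


Definition cplus (c : nat -> nat) (i j : nat) : nat :=
  if j <= i then c j else if j == i.+1 then i else c j.-1.
Definition cminus (c : nat -> nat) (i j : nat) : nat :=
  if j < i then c j else if j == i then i else c j.-1.

Section PW.
Variables (n : nat) (e : nat -> nat -> bool) (s : nat -> nat) (i : nat).
Hypothesis H : NCS n e s.

Let sinj := ncs_inj H.

Lemma spred j : j != 0 -> s j.-1.+1 = s j.
Proof. by move=> j0; rewrite prednK // lt0n. Qed.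

Section M1.
Hypotheses (si1 : s i.+1 = i) (isi : i < s i).
Definition c1 j := if j <= i then s j else s j.+1.

Lemma c1_plus j : cplus c1 i j = s j.
Proof.
rewrite /cplus /c1; case: ifP => h1; first by rewrite h1.
case: eqP => [->//|h2].
have -> : j.-1 <= i = false by apply/negbTE; lia.
by rewrite spred //; apply/eqP; lia.
Qed.

Lemma c1_minus j : cminus c1 i j = sw i s j.
Proof.
rewrite /cminus /c1 /sw; case: (ltngtP j i) => h.
- rewrite (_ : (j == i.+1) = false) //; apply/eqP; lia.
- case: eqP => [->|h2]; first by rewrite /= leqnn.
  rewrite (_ : j.-1 <= i = false); last by apply/negbTE; lia.
  by rewrite spred //; apply/eqP; lia.
- by rewrite si1.
Qed.

Lemma c1_del j : hatf i (sdel i s j) = c1 j.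
Proof.
rewrite /sdel /stil /c1 /hatf; case: (ltnP j i) => h.
- have sji : s j != i.
    apply/eqP => q; have hh : j = i.+1 by apply: sinj; rewrite q si1.
    lia.
  rewrite (negbTE sji) -/(hatf i _) hatf_unhat //.
  by have -> : j <= i by lia.
- case: (eqVneq j i) => [->|ji].
    rewrite si1 eqxx -/(hatf i _) hatf_unhat ?leqnn //; apply/eqP; lia.
  have sji : s j.+1 != i.
    apply/eqP => q; have hh : j.+1 = i.+1 by apply: sinj; rewrite q si1.
    lia.
  rewrite (negbTE sji) -/(hatf i _) hatf_unhat //.
  by have -> : j <= i = false by apply/negbTE; lia.
Qed.
End M1.

Section M2.
Hypotheses (sii : s i = i) (si1 : s i.+1 < i).
Definition c2 j := if j < i then s j else s j.+1.

Lemma c2_minus j : cminus c2 i j = s j.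
Proof.
rewrite /cminus /c2; case: ifP => h1; first by rewrite h1.
case: eqP => [->//|h2].
have -> : j.-1 < i = false by apply/negbTE; lia.
by rewrite spred //; apply/eqP; lia.
Qed.

Lemma c2_plus j : cplus c2 i j = sw i s j.
Proof.
rewrite /cplus /c2 /sw; case: (ltngtP j i) => h.
- rewrite (_ : (j == i.+1) = false) //; apply/eqP; lia.
- case: eqP => [_|h2]; first by rewrite sii.
  rewrite (_ : j.-1 < i = false); last by apply/negbTE; lia.
  by rewrite spred //; apply/eqP; lia.
- by rewrite h.
Qed.

Lemma c2_del j : hatf i (sdel i s j) = c2 j.
Proof.
rewrite /sdel /stil /c2 /hatf; case: (ltnP j i) => h.
- have sji : s j != i.
    apply/eqP => q; have hh : j = i by apply: sinj; rewrite q sii.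
    lia.
  by rewrite (negbTE sji) -/(hatf i _) hatf_unhat.
- have sji : s j.+1 != i.
    apply/eqP => q; have hh : j.+1 = i by apply: sinj; rewrite q sii.
    lia.
  by rewrite (negbTE sji) -/(hatf i _) hatf_unhat.
Qed.
End M2.
End PW.



Lemma sorted_nth_lt (L : seq nat) a b : sorted ltn L -> a < size L -> b < size L ->
  (nth 0 L a < nth 0 L b) = (a < b).
Proof.
move=> sL aL bL; apply/idP/idP => h.
  rewrite ltnNge; apply/negP => ba.
  have sL' : sorted leq L by move: sL; rewrite ltn_sorted_uniq_leq => /andP [].
  have := @sorted_leq_nth _ _ leq_trans leqnn 0 _ sL' b a bL aL ba; lia.
exact: (@sorted_ltn_nth _ _ ltn_trans 0 _ sL a b aL bL h).
Qed.

Lemma sorted_nth_le (L : seq nat) a b : sorted ltn L -> a < size L -> b < size L ->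
  (nth 0 L a <= nth 0 L b) = (a <= b).
Proof. by move=> sL aL bL; rewrite leqNgt sorted_nth_lt // -leqNgt. Qed.

Lemma mem_nth_nat (L : seq nat) (k : nat) : k < size L -> nth 0 L k \in L.
Proof. exact: mem_nth. Qed.

Lemma ncval_spec (L : seq nat) (x : nat) : sorted ltn L -> x \in L ->
  let j := index x L in
  let f := if j == 0 then last 0 L else nth 0 L j.-1 in
  [/\ f \in L, f < x -> forall y : nat, y \in L -> ~ (f < y < x) &
      x <= f -> forall y : nat, y \in L -> x <= y <= f].
Proof.
move=> sL xL j f.
have jL : j < size L by rewrite index_mem.
have xj : nth 0 L j = x by rewrite nth_index.
have sz : 0 < size L by apply: leq_ltn_trans jL.
have lastE : last 0 L = nth 0 L (size L).-1.
  by case: L sL xL {j f jL xj sz} => // a L' _ _; rewrite (nth_last 0) /=.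
have yE : forall y, y \in L -> y = nth 0 L (index y L) /\ index y L < size L.
  by move=> y yL; rewrite nth_index // index_mem.
have szE : (size L).-1.+1 = size L := prednK sz.
rewrite /f; case: (eqVneq j 0) => [j0|j0].
- split.
  + rewrite lastE; apply: mem_nth_nat; lia.
  + rewrite lastE -xj j0 sorted_nth_lt //; lia.
  + move=> _ y /yE [ye yL]; rewrite ye; rewrite lastE -xj j0 !sorted_nth_le //; lia.
- have jE : j.-1.+1 = j by rewrite prednK // lt0n.
  split.
  + apply: mem_nth_nat; lia.
  + move=> _ y /yE [ye yL]; rewrite ye; rewrite -xj !sorted_nth_lt //; lia.
  + move=> h; exfalso; move: h; rewrite -xj sorted_nth_le //; lia.
Qed.

Section Conv.
Variables (n : nat) (s : {perm 'I_n}) (Q : {set {set 'I_n}}).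
Hypotheses (hP : partition Q [set: 'I_n]) (hnc : noncrossing Q)
  (hs : forall x, val (s x) = ncperm_val Q x).

Definition eQ (x y : nat) : bool :=
  [exists x' : 'I_n, exists y' : 'I_n, [&& val x' == x, val y' == y & y' \in pblock Q x']].

Lemma cov x' : x' \in cover Q.
Proof. by rewrite (cover_partition hP) inE. Qed.

Let tI : trivIset Q := partition_trivIset hP.

Lemma eQ_inv x y : eQ x y -> exists x' y' : 'I_n, [/\ val x' = x, val y' = y & y' \in pblock Q x'].
Proof.
by move=> /existsP [x' /existsP [y' /and3P [/eqP h1 /eqP h2 h3]]]; exists x', y'.
Qed.

Lemma eQ_ord (x' y' : 'I_n) : eQ (val x') (val y') = (y' \in pblock Q x').
Proof.
apply/idP/idP => [/eQ_inv [x'' [y'' [/val_inj -> /val_inj -> //]]]|h].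
by apply/existsP; exists x'; apply/existsP; exists y'; rewrite !eqxx h.
Qed.

Lemma pb_sym (x' y' : 'I_n) : y' \in pblock Q x' -> x' \in pblock Q y'.
Proof. by move=> h; rewrite (same_pblock tI h) mem_pblock cov. Qed.

Lemma pb_trans (x' y' z' : 'I_n) : y' \in pblock Q x' -> z' \in pblock Q y' -> z' \in pblock Q x'.
Proof. by move=> h1 h2; rewrite -(same_pblock tI h1). Qed.

Lemma perm_nat_val (x' : 'I_n) : perm_nat s (val x') = val (s x').
Proof. by rewrite /perm_nat valK. Qed.

Lemma L_mem (x' : 'I_n) (v : nat) :
  (v \in sort leq [seq val y | y <- enum (pblock Q x')]) = eQ (val x') v.
Proof.
rewrite mem_sort; apply/mapP/idP.
  by move=> [y' yB ->]; rewrite eQ_ord -(mem_enum (mem (pblock Q x'))).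
move=> /eQ_inv [x'' [y' [/val_inj <- <- h]]]; exists y' => //.
by rewrite mem_enum.
Qed.

Lemma L_sorted (x' : 'I_n) : sorted ltn (sort leq [seq val y | y <- enum (pblock Q x')]).
Proof.
rewrite ltn_sorted_uniq_leq sort_uniq (map_inj_uniq val_inj) enum_uniq /=.
exact: (sort_sorted leq_total).
Qed.

Lemma conv_NCS : NCS n eQ (perm_nat s).
Proof.
split.
- move=> x y /eQ_inv [x' [y' [hx _ _]]]; rewrite -hx; exact: ltn_ord.
- move=> x xn; have -> : x = val (Ordinal xn) by [].
  by rewrite eQ_ord mem_pblock cov.
- move=> x y /eQ_inv [x' [y' [<- <- h]]]; rewrite eQ_ord; exact: pb_sym.
- move=> x y z /eQ_inv [x' [y' [<- <- h1]]] /eQ_inv [y'' [z' [hy <- h2]]]; have ey := val_inj hy; subst y''.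
  rewrite eQ_ord; exact: pb_trans h1 h2.
- move=> a b c d /eQ_inv [a' [b' [<- <- hab]]] /eQ_inv [c' [d' [<- <- hcd]]] ac cb bd.
  rewrite eQ_ord -(eq_pblock c' tI (cov a')).
  apply/negPn/negP => hne.
  apply: (hnc (pblock_mem (cov a')) (pblock_mem (cov c')) hne).
  exists a', b', c', d'; split; last by split.
  by split => //; rewrite mem_pblock cov.
- move=> x xn; rewrite /perm_nat insubF //; apply/negbTE; rewrite -leqNgt; exact: xn.
- move=> x xn; have -> : x = val (Ordinal xn) by [].
  rewrite perm_nat_val hs -L_mem /ncperm_val.
  have := ncval_spec (L_sorted (Ordinal xn)) (x := val (Ordinal xn)).
  by rewrite L_mem eQ_ord mem_pblock cov => /(_ isT) [].
- move=> x y xn; have -> : x = val (Ordinal xn) by [].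
  rewrite perm_nat_val hs -L_mem /ncperm_val => h hy h1 h2.
  have := ncval_spec (L_sorted (Ordinal xn)) (x := val (Ordinal xn)).
  rewrite L_mem eQ_ord mem_pblock cov => /(_ isT) [_ hp _].
  by apply: (hp h y hy); rewrite h1 h2.
- move=> x y xn; have -> : x = val (Ordinal xn) by [].
  rewrite perm_nat_val hs -L_mem /ncperm_val => h hy.
  have := ncval_spec (L_sorted (Ordinal xn)) (x := val (Ordinal xn)).
  rewrite L_mem eQ_ord mem_pblock cov => /(_ isT) [_ _ hm].
  exact: (hm h y hy).
Qed.

End Conv.

Import GRing.Theory Num.Theory.
Local Open Scope ring_scope.




Section Subst.
Context {V : choiceType}.

Definition cmev (h : V -> xtpoly) (m : cmonom V) : xtpoly :=
  \prod_(v <- finsupp m) h v ^+ m v.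

Lemma cmevEw h (d : {fset V}) (m : cmonom V) : (finsupp m `<=` d)%fset ->
  cmev h m = \prod_(v <- d) h v ^+ m v.
Proof.
move=> le; rewrite /cmev (big_fset_incl _ le) //.
by move=> i _; rewrite -cmE_neq0 negbK => /eqP ->; rewrite expr0.
Qed.

Lemma cmev_mmorph h : mmorphism (cmev h).
Proof.
split.
  move=> m1 m2 /=; rewrite (cmevEw h (fsubsetUl (finsupp m1) (finsupp m2))).
  rewrite (cmevEw h (fsubsetUr (finsupp m1) (finsupp m2))).
  rewrite (cmevEw h (d := (finsupp m1 `|` finsupp m2)%fset)); last by rewrite mdomD.
  by rewrite -big_split /=; apply: eq_bigr => i _; rewrite cmM exprD.
by rewrite /cmev mdom1 big_seq_fset0.
Qed.

HB.instance Definition _ h := isMultiplicative.Build (cmonom V) xtpoly (cmev h)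
  (cmev_mmorph h).

Lemma msubstE h : @msubst V h = mmap (@malgC (cmonom var) int) (cmev h).
Proof. by []. Qed.

End Subst.

Section SubstTheory.
Context {V : choiceType}.
Implicit Types (h : V -> xtpoly) (p q : {malg int[{cmonom V}]}).

Lemma msubstD h : {morph msubst h : x y / x + y}.
Proof. by move=> x y; rewrite msubstE rmorphD. Qed.
Lemma msubstB h : {morph msubst h : x y / x - y}.
Proof. by move=> x y; rewrite msubstE rmorphB. Qed.
Lemma msubstM h : {morph msubst h : x y / x * y}.
Proof. by move=> x y; rewrite msubstE rmorphM. Qed.
Lemma msubst0 h : msubst h 0 = 0.
Proof. by rewrite msubstE rmorph0. Qed.
Lemma msubst1 h : msubst h 1 = 1.
Proof. by rewrite msubstE rmorph1. Qed.
Lemma msubstC h c : msubst h c%:MP = c%:MP.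
Proof. by rewrite msubstE mmapC. Qed.
Lemma msubstXn h p k : msubst h (p ^+ k) = msubst h p ^+ k.
Proof. by rewrite msubstE rmorphXn. Qed.
Lemma msubst_sum h (I : Type) (r : seq I) (P : pred I) (F : I -> {malg int[{cmonom V}]}) :
  msubst h (\sum_(i <- r | P i) F i) = \sum_(i <- r | P i) msubst h (F i).
Proof. by rewrite msubstE rmorph_sum. Qed.
Lemma msubst_prod h (I : Type) (r : seq I) (P : pred I) (F : I -> {malg int[{cmonom V}]}) :
  msubst h (\prod_(i <- r | P i) F i) = \prod_(i <- r | P i) msubst h (F i).
Proof. by rewrite msubstE rmorph_prod. Qed.
Lemma msubstU h v : msubst h << @ucm V v >> = h v.
Proof.
rewrite msubstE mmapU.
change ((1:int)%:MP * cmev h (ucm v) = h v); rewrite mpolyC1E mul1r.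
by rewrite /cmev mdomU big_seq_fset1 cmUU expr1.
Qed.
Lemma msubst_ext h1 h2 p : h1 =1 h2 -> msubst h1 p = msubst h2 p.
Proof.
move=> eh.
have e : cmev h1 =1 cmev h2.
  by move=> m; rewrite /cmev; apply: eq_bigr => v _; rewrite eh.
unfold msubst; refine (eq_bigr _ _) => m _.
exact: (f_equal (fun z => (p@_m)%:MP * z) (e m)).
Qed.
End SubstTheory.

Lemma msubst_comp {V : choiceType} (g : var -> xtpoly) (h : V -> xtpoly) (p : {malg int[{cmonom V}]}) :
  msubst g (msubst h p) = msubst (fun v => msubst g (h v)) p.
Proof.
have -> : msubst h p = \sum_(m <- msupp p) (p@_m)%:MP * cmev h m by [].
rewrite msubst_sum.
have E : forall m : cmonom V, msubst g (cmev h m) = cmev (fun v => msubst g (h v)) m.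
  move=> m; rewrite /cmev msubst_prod; refine (eq_bigr _ _) => v _.
  exact: msubstXn.
transitivity (\sum_(m <- msupp p) (p@_m)%:MP * cmev (fun v => msubst g (h v)) m); last by [].
refine (eq_bigr _ _) => m _.
rewrite msubstM msubstC.
exact: (f_equal (fun z => (p@_m)%:MP * z) (E m)).
Qed.

Lemma msubstX (h : var -> xtpoly) k : msubst h (X k) = h (inl k).
Proof. exact: msubstU. Qed.
Lemma msubstT (h : var -> xtpoly) k : msubst h (T k) = h (inr k).
Proof. exact: msubstU. Qed.






Definition Dt (k : nat) : xtpoly := T k.+1 - T k.

Lemma GP0 : graham_positive 0.
Proof. by exists 0; split => [m|]; rewrite ?mcoeff0 ?msubst0. Qed.

Lemma GPC (c : int) : 0 <= c -> graham_positive c%:MP.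
Proof.
move=> c0; exists c%:MP; split => [m|]; last exact: msubstC.
by rewrite mcoeffC mulrn_wge0.
Qed.

Lemma GP1 : graham_positive 1.
Proof. by rewrite -mpolyC1E; apply: GPC. Qed.

Lemma GPD f g : graham_positive f -> graham_positive g -> graham_positive (f + g).
Proof.
move=> [q1 [q1p <-]] [q2 [q2p <-]]; exists (q1 + q2); split; last exact: msubstD.
by move=> m; rewrite mcoeffD addr_ge0.
Qed.

Lemma GPM f g : graham_positive f -> graham_positive g -> graham_positive (f * g).
Proof.
move=> [q1 [q1p <-]] [q2 [q2p <-]]; exists (q1 * q2); split; last exact: msubstM.
move=> m; rewrite mcoeffMl; apply: sumr_ge0 => k1 _; apply: sumr_ge0 => k2 _.
by rewrite mulrn_wge0 // mulr_ge0.
Qed.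

Lemma GP_sum (I : Type) (r : seq I) (P : pred I) (F : I -> xtpoly) :
  (forall i, P i -> graham_positive (F i)) -> graham_positive (\sum_(i <- r | P i) F i).
Proof. by move=> H; apply: (big_ind graham_positive GP0 GPD). Qed.

Lemma GP_prod (I : Type) (r : seq I) (P : pred I) (F : I -> xtpoly) :
  (forall i, P i -> graham_positive (F i)) -> graham_positive (\prod_(i <- r | P i) F i).
Proof. by move=> H; apply: (big_ind graham_positive GP1 GPM). Qed.

Lemma GPX f k : graham_positive f -> graham_positive (f ^+ k).
Proof.
move=> H; elim: k => [|k IH]; first by rewrite expr0; apply: GP1.
by rewrite exprS; apply: GPM.
Qed.

Lemma GP_step k : graham_positive (T k.+1 - T k).
Proof.
exists << @ucm nat k >>; split => [m|]; first by rewrite mcoeffU1 ler0n.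
by rewrite msubstU.
Qed.

Lemma GP_diff a b : (a <= b)%N -> graham_positive (T b - T a).
Proof.
elim: b => [|b IH]; first by rewrite leqn0 => /eqP ->; rewrite subrr; apply: GP0.
rewrite leq_eqVlt => /orP [/eqP ->|]; first by rewrite subrr; apply: GP0.
rewrite ltnS => /IH H.
have -> : T b.+1 - T a = (T b.+1 - T b) + (T b - T a) by rewrite addrA subrK.
apply: GPD; [exact: GP_step | exact: H].
Qed.

Lemma GP_msubst (V : choiceType) (h : V -> xtpoly) (q : {malg int[{cmonom V}]}) :
  (forall m, 0 <= q@_m) -> (forall v, graham_positive (h v)) ->
  graham_positive (msubst h q).
Proof.
move=> qp hp; apply: GP_sum => m _; apply: GPM; first exact: GPC.
apply: GP_prod => v _; apply: GPX; exact: hp.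
Qed.

Definition tshift (beta : nat -> nat) (v : var) : xtpoly :=
  match v with inl j => X j | inr j => T (beta j) end.

Lemma tshiftT (beta : nat -> nat) (k : nat) : msubst (tshift beta) (T k) = T (beta k).
Proof. exact: msubstT. Qed.

Lemma GP_shift_aux (beta : nat -> nat) (k : nat) :
  (beta k <= beta k.+1)%N -> graham_positive (msubst (tshift beta) (T k.+1 - T k)).
Proof.
move=> bk.
have E : msubst (tshift beta) (T k.+1 - T k) = T (beta k.+1) - T (beta k).
  exact: (etrans (msubstB _ _ _) (f_equal2 (fun a b => a - b) (tshiftT beta k.+1) (tshiftT beta k))).
rewrite E; exact: GP_diff.
Qed.

Lemma GP_shift (beta : nat -> nat) f :
  (forall k, beta k <= beta k.+1)%N -> graham_positive f ->
  graham_positive (msubst (tshift beta) f).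
Proof.
move=> bm [q [qp <-]]; rewrite msubst_comp; apply: GP_msubst; first exact: qp.
move=> k; apply: GP_shift_aux; exact: bm.
Qed.




Definition Phi (c : nat -> nat) (v : var) : xtpoly :=
  match v with inl j => T (c j) | inr j => T j end.

Lemma Rp_Phi c i f : msubst (Phi c) (Rp i f) = msubst (Phi (cplus c i)) f.
Proof.
refine (etrans (msubst_comp (Phi c) _ f) _); apply: msubst_ext => -[j|j].
- transitivity (T (cplus c i j)); last by [].
  rewrite /cplus; case: ifP => h1; first exact: (msubstX (Phi c) j).
  case: ifP => h2; first exact: (msubstT (Phi c) i).
  exact: (msubstX (Phi c) j.-1).
- exact: (msubstT (Phi c) j).
Qed.

Lemma Rm_Phi c i f : msubst (Phi c) (Rm i f) = msubst (Phi (cminus c i)) f.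
Proof.
refine (etrans (msubst_comp (Phi c) _ f) _); apply: msubst_ext => -[j|j].
- transitivity (T (cminus c i j)); last by [].
  rewrite /cminus; case: ifP => h1; first exact: (msubstX (Phi c) j).
  case: ifP => h2; first exact: (msubstT (Phi c) i).
  exact: (msubstX (Phi c) j.-1).
- exact: (msubstT (Phi c) j).
Qed.

Lemma hat_Phi c b i g : (forall j, c j = hatf i (b j)) ->
  msubst (Phi c) (hat_t i g) = msubst (tshift (hatf i)) (msubst (Phi b) g).
Proof.
move=> hc.
refine (etrans (msubst_comp (Phi c) _ g) (esym (etrans (msubst_comp (tshift (hatf i)) (Phi b) g) _))).
apply: msubst_ext => -[j|j].
- transitivity (T (c j)); last by symmetry; exact: (msubstX (Phi c) j).
  rewrite hc; exact: (msubstT (tshift (hatf i)) (b j)).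
- transitivity (T (hatf i j)); first exact: (msubstT (tshift (hatf i)) j).
  symmetry; rewrite /hatf; case: ifP => h; first exact: (msubstT (Phi c) j).
  exact: (msubstT (Phi c) j.+1).
Qed.

Lemma Phi_ext c1 c2 f : c1 =1 c2 -> msubst (Phi c1) f = msubst (Phi c2) f.
Proof.
move=> h; apply: msubst_ext => -[j|j]; last reflexivity.
by rewrite /Phi h.
Qed.

Lemma Phi_id c f : c =1 id -> msubst (Phi c) f = at_tt f.
Proof.
move=> h; apply: msubst_ext => -[j|j]; last reflexivity.
by rewrite /Phi h.
Qed.

Lemma sub_add1 (R : ringType) (x y a b g : R) : x - y = (a - b) * g -> x = y + (a - b) * g.
Proof. by move=> <-; rewrite addrC subrK. Qed.

Lemma sub_add2 (R : ringType) (x y a b g : R) : y - x = (a - b) * g -> x = y + (b - a) * g.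
Proof. by move=> h; rewrite -[b - a]opprB mulNr -h opprB addrC subrK. Qed.

Lemma main_gen (P : forest -> xtpoly) (hP : is_double_forest_family P) n :
  forall e s, NCS n e s -> forall F, graham_positive (msubst (Phi s) (P F)).
Proof.
case: hP => _ hat hE.
elim/ltn_ind: n => n IHn.
suff K : forall K e s, (n * (n * n) - mu n s < K)%N -> NCS n e s ->
    forall F, graham_positive (msubst (Phi s) (P F)).
  by move=> e s H; apply: (K _ e s (ltnSn _) H).
elim=> [|K IHK] e s hK H F; first by rewrite ltn0 in hK.
case: (boolP [forall x : 'I_n, s x == x]) => [/forallP hid|/forallPn [x0 hx0]].
  have sid : s =1 id.
    move=> x; case: (ltnP x n) => xn; first exact: (eqP (hid (Ordinal xn))).
    exact: (ncs_fix H xn).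
  rewrite (Phi_id _ sid) hat; case: ifP => _; [exact: GP1 | exact: GP0].
have ex : exists x, s x <> x by exists (val x0); apply/eqP.
have [i [i1n hm]] := ncs_move H ex.
have inn : (i < n)%N by lia.
set G := fun c => msubst (Phi c) (if i \in Qdes F then hat_t i (P (contract F i)) else 0).
have Estep : forall c, msubst (Phi (cplus c i)) (P F) - msubst (Phi (cminus c i)) (P F)
      = (T (c i) - T i) * G c.
  move=> c; have E := hE F i; rewrite /E_is in E.
  have eX : msubst (Phi c) (X i - T i) = T (c i) - T i :=
    etrans (msubstB _ _ _) (f_equal2 (fun a b => a - b) (msubstX (Phi c) i) (msubstT (Phi c) i)).
  have h1 : msubst (Phi c) ((X i - T i) * (if i \in Qdes F then hat_t i (P (contract F i)) else 0))
      = (T (c i) - T i) * G c :=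
    etrans (msubstM (Phi c) (X i - T i) _) (congr1 (fun z => z * G c) eX).
  have h2 : msubst (Phi c) (Rp i (P F) - Rm i (P F)) =
      msubst (Phi (cplus c i)) (P F) - msubst (Phi (cminus c i)) (P F) :=
    etrans (msubstB _ _ _) (f_equal2 (fun a b => a - b) (Rp_Phi c i (P F)) (Rm_Phi c i (P F))).
  exact: (etrans (esym h2) (etrans (esym (congr1 (msubst (Phi c)) E)) h1)).
have GPG : forall c, (forall j, c j = hatf i (sdel i s j)) -> graham_positive (G c).
  move=> c hc; rewrite /G; case: ifP => _; last by rewrite msubst0; exact: GP0.
  rewrite (hat_Phi _ hc); apply: GP_shift.
    by move=> k; rewrite /hatf; case: (ltnP k i); case: (ltnP k.+1 i); lia.
  apply: (IHn n.-1 _ (edel i e) (sdel i s) (NCS_del H inn)); lia.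
have IHsw : forall e', NCS n e' (sw i s) -> (s i.+1 < s i)%N ->
    forall F', graham_positive (msubst (Phi (sw i s)) (P F')).
  move=> e' H' hlt; apply: (IHK e' (sw i s) _ H').
  have := mu_sw i1n hlt; have := mu_bound H'; have := mu_bound H; lia.
case: hm => [[si1 isi]|[sii si1]].
- have e1 := Phi_ext (P F) (c1_plus si1 isi).
  have e2 := Phi_ext (P F) (c1_minus si1 isi).
  have E1 : msubst (Phi s) (P F) - msubst (Phi (sw i s)) (P F) = (T (c1 s i i) - T i) * G (c1 s i) :=
    etrans (f_equal2 (fun a b => a - b) (esym e1) (esym e2)) (Estep (c1 s i)).
  rewrite (sub_add1 E1).
  apply: GPD.
    by apply: (IHsw _ (NCS_M1 H i1n si1 isi)); lia.
  apply: GPM.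
    by apply: GP_diff; rewrite /c1 leqnn; lia.
  by apply: GPG => j; rewrite (c1_del H si1 isi).
- have e1 := Phi_ext (P F) (c2_plus sii si1).
  have e2 := Phi_ext (P F) (c2_minus sii si1).
  have E2 : msubst (Phi (sw i s)) (P F) - msubst (Phi s) (P F) = (T (c2 s i i) - T i) * G (c2 s i) :=
    etrans (f_equal2 (fun a b => a - b) (esym e1) (esym e2)) (Estep (c2 s i)).
  rewrite (sub_add2 E2).
  apply: GPD.
    by apply: (IHsw _ (NCS_M2 H i1n sii si1)); lia.
  apply: GPM.
    by apply: GP_diff; rewrite /c2 ltnn; lia.
  by apply: GPG => j; rewrite (c2_del H sii si1).
Qed.


Theorem corollary8p13 :
  forall P : forest -> xtpoly, is_double_forest_family P ->
  forall (F : forest) (n : nat) (s : {perm 'I_n}),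
    noncrossing_perm s -> graham_positive (ev s (P F)).
Proof.
move=> P hP F n s [Q [hQ hnc hs]].
exact: (main_gen hP (conv_NCS hQ hnc hs) F).
Qed.
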